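(* Let $S$ be a random $*$-tree on a $*$-tree $B\subseteq\mathbb{A}^*$ with bounded offspring distributions $\{M_x\}_{x\in B}$. Let $\mathscr{A}$ assign to each $x\in B'$ a nonempty monotonic collection $\mathscr{A}_x$ of subsets of $W_{B'}(x)$. Define $g_{\mathscr{A}}:[0,1]\to[0,1]$ by $g_{\mathscr{A}}(s)=\sup_{x\in B'}\mathbb{P}(M_x^{(s)}\notin\mathscr{A}_x)$, and let $s_0$ be the smallest fixed point of $g_{\mathscr{A}}$ in $[0,1]$. Then $\sup_{x\in B'}\mathbb{P}\big(S^x\text{ has no }\mathscr{A}^x\text{-}*\text{-subtree}\ \big|\ x\in S\big)\le s_0.$
   Context: $\mathbb{A}$ is a finite alphabet, $\mathbb{A}^*$ the finite words (with empty word $\emptyset$); $j<i$ means $j$ is a proper prefix of $i$. For $S\subseteq\mathbb{A}^*$ and $i\in S$, the height is $h_S(i)=|\{j\in S:j<i\}|$. A $*$-tree is $S\subseteq\mathbb{A}^*$ with $\emptyset\in S$, such that every $\emptyset\ne i\in S$ has a unique $j\in S$ with $j<i$ and $h_S(j)=h_S(i)-1$, and each $S_n=h_S^{-1}(n)$ is finite. For $i\in S$: $W_S(i)=\{j\in\mathbb{A}^*: ij\in S_{h_S(i)+1}\}$ and $S^i=\{j:ij\in S\}$. A $*$-subtree of $S$ is a $*$-tree $Q\subseteq S$ such that for every $i\in Q$, $\{j\in S:j<i\}\subseteq Q$. Random $*$-tree on a $*$-tree $B$: given independent random variables $M_x$ ($x\in B$) with $M_x\subseteq W_B(x)$, set $S_0=\{\emptyset\}$,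 $S_n=\bigcup_{i\in S_{n-1}}\{ij:j\in M_i\}$, $S=\bigcup_nS_n$. $B'=\{i\in B:\mathbb{P}(i\in S)>0\}$. The offspring distributions are bounded if there is $C>0$ with $\mathbb{P}(|M_x|<C)=1$ for all $x\in B'$. For a map $x\mapsto\mathscr{A}_x$, a $*$-tree $Q$ is an $\mathscr{A}$-$*$-tree if $W_Q(i)\in\mathscr{A}_i$ for all $i\in Q$; $\mathscr{A}^x$ is the map $i\mapsto\mathscr{A}_{xi}$. $\mathscr{A}_x$ is monotonic if $X\in\mathscr{A}_x$ and $X\subseteq Y\subseteq W_{B'}(x)$ imply $Y\in\mathscr{A}_x$. $M_x^{(s)}=M_x\cap Y$ with $Y$ independent of $M_x$, $\mathbb{P}(Y=D)=(1-s)^{|D|}s^{|W_B(x)\setminus D|}$ for $D\subseteq W_B(x)$. *)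

(* Defs.v *)
From HB Require Import structures.
From mathcomp Require Import all_boot all_order all_algebra.
From mathcomp Require Import finmap.
From mathcomp Require Import all_classical all_reals all_analysis.

Set Implicit Arguments.
Unset Strict Implicit.
Unset Printing Implicit Defensive.

Import Order.TTheory GRing.Theory Num.Theory.
Local Open Scope classical_set_scope.
Local Open Scope ring_scope.

Section Words.
Variable A : finType.
Notation word := (seq A).

Definition pprefix (j i : word) : bool := prefix j i && (size j < size i)%N.

(** height h_S(i) = |{ j in S : j < i }| (always a finite set). *)
Definition fcard (T : choiceType) (X : set T) : nat := size (enum_fset (fset_set X)).

Definition height (S : set word) (i : word) : nat :=
  fcard [set j | S j /\ pprefix j i].

Definition level (S : set word) (n : nat) : set word :=
  [set i | S i /\ height S i = n].

Definition star_tree (S : set word) : Prop :=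
  S [::] /\
  (forall i, S i -> i <> [::] ->
     exists! j, S j /\ pprefix j i /\ (height S j).+1 = height S i) /\
  (forall n, finite_set (level S n)).

Definition Wset (S : set word) (i : word) : set word :=
  [set j | level S (height S i).+1 (i ++ j)].

Definition shift (S : set word) (i : word) : set word := [set j | S (i ++ j)].

Definition star_subtree (Q T : set word) : Prop :=
  star_tree Q /\ Q `<=` T /\
  (forall i, Q i -> forall j, T j -> pprefix j i -> Q j).

Definition is_A_tree (Acoll : word -> set (set word)) (Q : set word) : Prop :=
  star_tree Q /\ (forall i, Q i -> Acoll i (Wset Q i)).

Definition Ashift (Acoll : word -> set (set word)) (x : word) :
  word -> set (set word) := fun i => Acoll (x ++ i).

Definition monotonic (Ax : set (set word)) (W : set word) : Prop :=
  forall X Y, Ax X -> X `<=` Y -> Y `<=` W -> Ax Y.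

(** The random *-tree generated by offspring sets M (pointwise in ω). *)
Fixpoint rlevel (Omega : Type) (M : word -> Omega -> set word)
    (w : Omega) (n : nat) : set word :=
  match n with
  | 0 => [set [::]]
  | n'.+1 => [set v | exists i j, rlevel M w n' i /\ M i w j /\ v = i ++ j]
  end.

Definition rtree (Omega : Type) (M : word -> Omega -> set word) (w : Omega) :
  set word := \bigcup_(n in setT) rlevel M w n.

End Words.

Section Prob.
Variables (A : finType) (R : realType) (d : measure_display)
  (Omega : measurableType d) (P : probability Omega R).
Notation word := (seq A).

(** Each M_x is a (discrete) random variable: its atoms are events. *)
Definition offspring_measurable (B : set word) (M : word -> Omega -> set word)
  : Prop :=
  forall x, B x -> forall D : set word, measurable [set w | M x w = D].

(** Mutual independence of the discrete family {M_x}_{x in B}: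
    product rule over every finite family of distinct indices. *)
Definition offspring_independent (B : set word) (M : word -> Omega -> set word)
  : Prop :=
  forall (s : seq word) (D : word -> set word),
    uniq s -> (forall x, x \in s -> B x) ->
    fine (P (\big[setI/setT]_(x <- s) [set w | M x w = D x])) =
    \prod_(x <- s) fine (P [set w | M x w = D x]).

Definition Bprime (B : set word) (M : word -> Omega -> set word) : set word :=
  [set i | B i /\ (0 < P [set w | rtree M w i])%E].

Definition bounded_offspring (B : set word) (M : word -> Omega -> set word)
  : Prop :=
  exists C : R, 0 < C /\
    forall x, Bprime B M x ->
      P [set w | (fcard (M x w))%:R < C] = 1%E.

(** P(M_x^{(s)} notin 𝒜_x), where M_x^{(s)} = M_x ∩ Y with Y independent of
    M_x and P(Y = E) = (1-s)^{|E|} s^{|W_B(x) \ E|} for E ⊆ W_B(x):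
    by independence this is
      Σ_{D ⊆ W} Σ_{E ⊆ W} P(M_x = D) P(Y = E) 1[D ∩ E ∉ 𝒜_x]. *)
Definition thinned_miss_prob (B : set word) (M : word -> Omega -> set word)
    (Acoll : word -> set (set word)) (x : word) (s : R) : R :=
  let W := Wset B x in
  (\sum_(D \in [set D | D `<=` W])
    \sum_(E \in [set E | E `<=` W])
      fine (P [set w | M x w = D]) *
      ((1 - s) ^+ fcard E * s ^+ fcard (W `\` E)) *
      \1_(~` Acoll x) (D `&` E))%R.

Definition gA (B : set word) (M : word -> Omega -> set word)
    (Acoll : word -> set (set word)) (s : R) : R :=
  sup [set thinned_miss_prob B M Acoll x s | x in Bprime B M].

Definition no_subtree_event (M : word -> Omega -> set word)
    (Acoll : word -> set (set word)) (x : word) : set Omega :=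
  [set w | ~ exists Q, star_subtree Q (shift (rtree M w) x) /\
                       is_A_tree (Ashift Acoll x) Q].

Definition cond_no_subtree (M : word -> Omega -> set word)
    (Acoll : word -> set (set word)) (x : word) : R :=
  fine (P (no_subtree_event M Acoll x `&` [set w | rtree M w x])) /
  fine (P [set w | rtree M w x]).

End Prob.

(* Main.v *)
Require Import Defs.
From HB Require Import structures.
From mathcomp Require Import all_boot all_order all_algebra.
From mathcomp Require Import finmap.
From mathcomp Require Import all_classical all_reals all_analysis.
From mathcomp Require Import ring lra.
Import Order.TTheory GRing.Theory Num.Theory.
Local Open Scope classical_set_scope.
Local Open Scope ring_scope.

Set Implicit Arguments.
Unset Strict Implicit.
Unset Printing Implicit Defensive.

Local Close Scope ring_scope.


Section Fcard.
Variable T : choiceType.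

Lemma fcardE (X : set T) : Defs.fcard X = #|` fset_set X|.
Proof. by []. Qed.

Lemma fcard_U1 (X : set T) z : finite_set X -> ~ X z ->
  Defs.fcard (z |` X) = (Defs.fcard X).+1.
Proof.
move=> fX nXz; rewrite !fcardE fset_setU1 // cardfsU1.
by rewrite in_fset_set // memNset.
Qed.

Lemma fcard_disjU (X Y : set T) : finite_set X -> finite_set Y ->
  X `&` Y = set0 -> Defs.fcard (X `|` Y) = (Defs.fcard X + Defs.fcard Y)%N.
Proof.
move=> fX fY XY; rewrite !fcardE fset_setU // -cardfsUI.
by rewrite -fset_setI // XY fset_set0 cardfs0 addn0.
Qed.

Lemma fcard_eq0 (X : set T) : finite_set X -> Defs.fcard X = 0%N -> X = set0.
Proof.
move=> fX; rewrite fcardE => /eqP; rewrite cardfs_eq0 => /eqP.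
exact: fset_set_set0.
Qed.

Lemma fcard0 : Defs.fcard (set0 : set T) = 0%N.
Proof. by rewrite fcardE fset_set0 cardfs0. Qed.

End Fcard.

Section Words.
Variable A : finType.
Notation word := (seq A).
Implicit Types (a b c i j k x y : word) (T : set word).

Lemma pp_prefix a b : pprefix a b -> prefix a b.
Proof. by case/andP. Qed.

Lemma pp_size a b : pprefix a b -> (size a < size b)%N.
Proof. by case/andP. Qed.

Lemma pp_irr a : ~ pprefix a a.
Proof. by move/pp_size; rewrite ltnn. Qed.

Lemma prefix_eq_take a b : prefix a b -> a = take (size a) b.
Proof. by rewrite prefixE => /eqP ->. Qed.

Lemma prefix_total a b c : prefix a c -> prefix b c -> prefix a b \/ prefix b a.
Proof.
move=> /prefix_eq_take ha /prefix_eq_take hb.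
case: (leqP (size a) (size b)) => h.
  left; rewrite prefixE; apply/eqP.
  by rewrite [in LHS]hb take_takel // -ha.
right; rewrite prefixE; apply/eqP.
by rewrite [in LHS]ha take_takel ?(ltnW h) // -hb.
Qed.

Lemma prefix_size_eq a b : prefix a b -> size a = size b -> a = b.
Proof. by move=> /prefix_eq_take ha hs; rewrite ha hs take_size. Qed.

Lemma prefix_trans' a b c : prefix a b -> prefix b c -> prefix a c.
Proof. by move=> /prefixP[u ->] /prefixP[v ->]; rewrite -catA prefix_prefix. Qed.

Lemma pp_trans a b c : pprefix a b -> pprefix b c -> pprefix a c.
Proof.
move=> /andP[p1 s1] /andP[p2 s2]; apply/andP; split.
  exact: prefix_trans' p2.
exact: ltn_trans s2.
Qed.

Lemma pp_pre_trans a b c : pprefix a b -> prefix b c -> pprefix a c.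
Proof.
move=> /andP[p1 s1] p2; apply/andP; split; first exact: prefix_trans' p2.
case/prefixP: p2 => v ->; rewrite size_cat; exact: leq_trans s1 (leq_addr _ _).
Qed.

Lemma pre_pp_trans a b c : prefix a b -> pprefix b c -> pprefix a c.
Proof.
move=> p1 /andP[p2 s2]; apply/andP; split; first exact: prefix_trans' p2.
case/prefixP: p1 => v eb; rewrite eb size_cat in s2.
exact: leq_ltn_trans (leq_addr _ _) s2.
Qed.

Lemma prefix_size a b : prefix a b -> (size a <= size b)%N.
Proof. by case/prefixP => u ->; rewrite size_cat leq_addr. Qed.

Lemma pp_tri k a b : pprefix k b -> pprefix a b ->
  [\/ pprefix k a, k = a | pprefix a k].
Proof.
move=> /andP[pk sk] /andP[pa sa].
case: (prefix_total pk pa) => h.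
  case: (ltngtP (size k) (size a)) => hs.
  - by apply: Or31; apply/andP.
  - by move: (prefix_size h); rewrite leqNgt hs.
  - by apply: Or32; apply: prefix_size_eq.
case: (ltngtP (size a) (size k)) => hs.
- by apply: Or33; apply/andP.
- by move: (prefix_size h); rewrite leqNgt hs.
- by apply: Or32; symmetry; apply: prefix_size_eq.
Qed.

Lemma pp_cat a j : j <> [::] -> pprefix a (a ++ j).
Proof.
move=> hj; apply/andP; split; first exact: prefix_prefix.
rewrite size_cat -{1}(addn0 (size a)) ltn_add2l lt0n size_eq0.
by apply/eqP.
Qed.

Lemma pp_catE a b : pprefix a b -> exists j, b = a ++ j /\ j <> [::].
Proof.
move=> /andP[/prefixP[j ->] s]; exists j; split => // hj.
by move: s; rewrite hj cats0 ltnn.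
Qed.

Lemma pp_cat2 x i i' : pprefix (x ++ i) (x ++ i') = pprefix i i'.
Proof.
rewrite /pprefix !size_cat ltn_add2l prefix_catr //.
by rewrite eqxx.
Qed.

Lemma pp_nil a : ~ pprefix a [::].
Proof. by move/pp_size. Qed.

Definition PP T b := [set k | T k /\ pprefix k b].

Lemma finite_prefixes b : finite_set [set k : word | pprefix k b].
Proof.
apply: (@sub_finite_set _ _ [set` [seq take n b | n <- iota 0 (size b)]]) => //.
move=> k /andP[pk sk] /=; apply/mapP; exists (size k).
  by rewrite mem_iota add0n.
exact: prefix_eq_take.
Qed.

Lemma finite_PP T b : finite_set (PP T b).
Proof.
apply: sub_finite_set (finite_prefixes b) => k [].
by [].
Qed.

Lemma heightE T b : height T b = Defs.fcard (PP T b).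
Proof. by []. Qed.

Definition Mid T a b := [set k | T k /\ pprefix a k /\ pprefix k b].

Lemma height_split T a b : T a -> pprefix a b ->
  height T b = ((height T a).+1 + Defs.fcard (Mid T a b))%N.
Proof.
move=> Ta ab.
have E : PP T b = (a |` PP T a) `|` Mid T a b.
  apply/seteqP; split => k.
    move=> [Tk kb]; case: (pp_tri kb ab) => h.
    - by left; right.
    - by left; left.
    - by right.
  case=> [[->|[Tk ka]]|[Tk [ak kb]]] //.
  - exact: (conj Tk (pp_trans ka ab)).
have fM : finite_set (Mid T a b).
  by apply: sub_finite_set (finite_PP T b) => k [? [? ?]].
rewrite heightE E fcard_disjU //.
- rewrite fcard_U1 //; first exact: finite_PP.
  by move=> [_ /pp_irr].
- by rewrite finite_setU; split => //; exact: finite_PP.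
- apply/seteqP; split => // k [[->|[_ ka]] [_ [ak _]]].
    exact: pp_irr ak.
  by apply: (@pp_irr k); exact: pp_trans ak.
Qed.

Lemma height_lt T a b : T a -> pprefix a b -> (height T a < height T b)%N.
Proof. by move=> Ta ab; rewrite (height_split Ta ab) leq_addr. Qed.

Definition childT T a b := [/\ T a, T b, pprefix a b &
  forall k, T k -> pprefix a k -> pprefix k b -> False].

Lemma height_child T a b : childT T a b -> height T b = (height T a).+1.
Proof.
case=> Ta Tb ab hk; rewrite (height_split Ta ab).
suff -> : Mid T a b = set0 by rewrite fcard0 addn0.
by apply/seteqP; split => // k [Tk [ak kb]]; exact: hk Tk ak kb.
Qed.

Lemma child_of_height T a b : T a -> T b -> pprefix a b ->
  height T b = (height T a).+1 -> childT T a b.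
Proof.
move=> Ta Tb ab; rewrite (height_split Ta ab) => /eqP.
rewrite -{2}(addn0 (height T a).+1) eqn_add2l => /eqP h0.
have fM : finite_set (Mid T a b).
  by apply: sub_finite_set (finite_PP T b) => k [? [? ?]].
have := fcard_eq0 fM h0 => hM.
split => // k Tk ak kb.
have : Mid T a b k by [].
by rewrite hM.
Qed.

Lemma child_uniq T a a' b : childT T a b -> childT T a' b -> a = a'.
Proof.
case=> Ta _ ab h1 [Ta' _ a'b h2].
case: (pp_tri ab a'b) => // h.
- by case: (h1 a' Ta' h a'b).
- by case: (h2 a Ta h ab).
Qed.

Lemma childT_sub T T' a b : T' `<=` T -> T' a -> T' b -> childT T a b ->
  childT T' a b.
Proof.
move=> sub Ta Tb [_ _ ab h]; split => // k Tk; apply: h; exact: sub.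
Qed.

Lemma WsetE T a j : T a -> Wset T a j <-> childT T a (a ++ j).
Proof.
move=> Ta; split.
  move=> [Taj hj].
  have jn : j <> [::].
    by move=> ej; move: hj; rewrite ej cats0 => /eqP; rewrite -[X in X == _]addn0 -addn1 eqn_add2l.
  by apply: child_of_height => //; exact: pp_cat.
by move=> ch; split; [case: ch|rewrite (height_child ch)].
Qed.

Lemma shift_child T x i i' : childT (Defs.shift T x) i i' <-> childT T (x ++ i) (x ++ i').
Proof.
split.
  case=> Ti Ti' ii' h; split => //; first by rewrite pp_cat2.
  move=> k Tk ak kb.
  have [u ku] : exists u, k = x ++ u.
    have := pp_prefix ak => /(prefix_trans' (prefix_prefix x i)) /prefixP[u ->].
    by exists u.
  subst k; rewrite pp_cat2 in ak; rewrite pp_cat2 in kb.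
  exact: (h u Tk ak kb).
case=> Ti Ti' ii' h; split => //; first by rewrite -(pp_cat2 x).
by move=> k Tk ak kb; apply: (h (x ++ k)) => //; rewrite pp_cat2.
Qed.

End Words.


Fixpoint Gev (A : finType) (Omega : Type) (M : seq A -> Omega -> set (seq A))
  (Acoll : seq A -> set (set (seq A))) (n : nat) (y : seq A) : set Omega :=
  match n with
  | 0 => setT
  | n'.+1 => [set w | exists K, K `<=` M y w /\ Acoll y K /\
                forall j, K j -> Gev M Acoll n' (y ++ j) w]
  end.

Lemma Gev_dec (A : finType) (Omega : Type) (M : seq A -> Omega -> set (seq A))
  (Acoll : seq A -> set (set (seq A))) n y w :
  Gev M Acoll n.+1 y w -> Gev M Acoll n y w.
Proof.
elim: n y => [//|n IH] y /= [K [KM [AK HK]]].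
by exists K; split => //; split => // j Kj; apply: IH; apply: HK.
Qed.

Lemma Gev_mono (A : finType) (Omega : Type) (M : seq A -> Omega -> set (seq A))
  (Acoll : seq A -> set (set (seq A))) n m y w : (n <= m)%N ->
  Gev M Acoll m y w -> Gev M Acoll n y w.
Proof.
move=> nm; rewrite -(subnK nm); elim: (m - n)%N => [//|k IH].
move=> h; apply: IH; apply: Gev_dec; rewrite -addSn; exact: h.
Qed.

Section Tree.
Variables (A : finType) (Omega : Type) (B : set (seq A))
  (M : seq A -> Omega -> set (seq A)).
Notation word := (seq A).
Hypothesis B0 : B [::].
Hypothesis HM : forall x, B x -> forall w, M x w `<=` Wset B x.
Implicit Types (a b i j k x y : word).

Lemma rtreeP w y : rtree M w y <-> exists n, rlevel M w n y.
Proof.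
split; first by case=> n _ h; exists n.
by case=> n h; exists n.
Qed.

Lemma height_nil (T : set word) : height T [::] = 0%N.
Proof.
rewrite heightE.
suff -> : PP T [::] = set0 by rewrite fcard0.
by apply/seteqP; split => // k [_ /pp_nil].
Qed.

Lemma rlevel_B w n y : rlevel M w n y -> B y /\ height B y = n.
Proof.
elim: n y => [|n IH] y /=; first by move=> ->; rewrite height_nil.
case=> i [j [li [Mij ->]]].
have [Bi hi] := IH _ li.
by have [] := HM Bi Mij; rewrite hi.
Qed.

Lemma S_B w y : rtree M w y -> B y.
Proof. by case/rtreeP => n /rlevel_B []. Qed.

Lemma S_nil w : rtree M w [::].
Proof. by apply/rtreeP; exists 0%N. Qed.

Lemma S_child w a j : rtree M w a -> M a w j -> rtree M w (a ++ j).
Proof.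
case/rtreeP => n ha Mj; apply/rtreeP; exists n.+1.
by exists a, j.
Qed.

Lemma S_childB w a j : rtree M w a -> M a w j -> childT B a (a ++ j).
Proof.
move=> Sa Mj; have Ba := S_B Sa.
by apply/WsetE => //; apply: HM Mj.
Qed.

Lemma S_parent w b : rtree M w b -> b <> [::] ->
  exists a j, [/\ rtree M w a, M a w j & b = a ++ j].
Proof.
case/rtreeP => [[|n]] /=; first by move=> ->.
case=> a [j [la [Mj ->]]] _; exists a, j; split => //.
by apply/rtreeP; exists n.
Qed.

Lemma S_prefix_closed w b k : rtree M w b -> B k -> pprefix k b -> rtree M w k.
Proof.
case/rtreeP => n; elim: n b => [|n IH] b /=.
  by move=> -> _ /pp_nil.
case=> a [j [la [Mj ->]]] Bk kb.
have Sa : rtree M w a by apply/rtreeP; exists n.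
have [_ _ ab hmid] := S_childB Sa Mj.
case: (pp_tri kb ab) => h.
- exact: IH la Bk h.
- by rewrite h.
- by case: (hmid k Bk h kb).
Qed.

Lemma S_childT_B w a b : rtree M w a -> rtree M w b ->
  childT (rtree M w) a b <-> childT B a b.
Proof.
move=> Sa Sb; split.
  case=> _ _ ab h; split => //; [exact: S_B Sa|exact: S_B Sb|].
  move=> k Bk ak kb; apply: (h k) => //.
  exact: S_prefix_closed kb.
apply: childT_sub => //; exact: S_B.
Qed.

Lemma S_childT_M w a b : childT (rtree M w) a b ->
  exists j, b = a ++ j /\ M a w j.
Proof.
move=> ch; have [Sa Sb ab _] := ch.
have bn : b <> [::] by move=> eb; move: ab; rewrite eb => /pp_nil.
have [p [j [Sp Mj eb]]] := S_parent Sb bn.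
have ch1 : childT B a b by apply/(S_childT_B Sa Sb).
have ch2 : childT B p b by rewrite eb; exact: S_childB Mj.
have ap := child_uniq ch1 ch2.
by exists j; subst.
Qed.

Lemma S_childT w a j : rtree M w a -> M a w j -> childT (rtree M w) a (a ++ j).
Proof.
move=> Sa Mj; apply/S_childT_B => //; first exact: S_child.
exact: S_childB Mj.
Qed.

End Tree.


Lemma catIl (T : Type) (x a b : seq T) : x ++ a = x ++ b -> a = b.
Proof. by elim: x => // z x IH /= [] /IH. Qed.

Lemma cat_nil_l (T : Type) (a b : seq T) : a ++ b = [::] -> a = [::].
Proof. by case: a. Qed.

Fixpoint subs (T : choiceType) (s : seq T) : seq (set T) :=
  match s with
  | [::] => [:: set0]
  | z :: s' => subs s' ++ map (fun E => z |` E) (subs s')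
  end.

Lemma subs_sub (T : choiceType) (s : seq T) K : K \in subs s -> K `<=` [set` s].
Proof.
elim: s K => [|z s IH] K /=.
  by rewrite mem_seq1 => /eqP ->.
rewrite mem_cat => /orP[/IH h|/mapP[E /IH h ->]] k.
  by move/h => /= ks; rewrite in_cons ks orbT.
by case=> [->|/h /= ks]; rewrite /= in_cons ?eqxx // ks orbT.
Qed.

Lemma subs_complete (T : choiceType) (s : seq T) K : K `<=` [set` s] ->
  K \in subs s.
Proof.
elim: s K => [|z s IH] K /= Ks.
  suff -> : K = set0 by rewrite mem_seq1.
  by apply/seteqP; split => // k /Ks.
have h : K `\ z `<=` [set` s].
  move=> k [/Ks /=]; rewrite in_cons => /orP[/eqP ->|] //.
rewrite mem_cat; case: (pselect (K z)) => Kz.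
  apply/orP; right; apply/mapP; exists (K `\ z); first exact: IH.
  by rewrite setD1K.
apply/orP; left; suff -> : K = K `\ z by exact: IH.
by rewrite not_setD1.
Qed.

Lemma fin_antitone (X : eqType) (ks : seq X) (phi : nat -> X -> Prop) :
  (forall n K, phi n.+1 K -> phi n K) ->
  (forall n, exists2 K, K \in ks & phi n K) ->
  exists2 K, K \in ks & forall n, phi n K.
Proof.
move=> anti hn.
have mono : forall n m K, (n <= m)%N -> phi m K -> phi n K.
  move=> n m K nm; rewrite -(subnK nm); elim: (m - n)%N => [//|k IH].
  by rewrite addSn => /anti.
apply: contrapT => hno.
have hK : forall K, K \in ks -> exists n, ~ phi n K.
  move=> K Kks; apply: contrapT => hall; apply: hno; exists K => // n.
  by apply: contrapT => hn'; apply: hall; exists n.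
have [N hN] : exists N, forall K, K \in ks -> ~ phi N K.
  elim: ks hK {hn hno} => [|z ks IH] hK; first by exists 0%N.
  have [N1 h1] : exists N, forall K, K \in ks -> ~ phi N K.
    by apply: IH => K Kks; apply: hK; rewrite inE Kks orbT.
  have [n0 h0] := hK z (mem_head _ _).
  exists (maxn N1 n0) => K; rewrite inE => /orP[/eqP ->|Kks] h.
    by apply: h0; apply: (mono _ (maxn N1 n0)) => //; exact: leq_maxr.
  by apply: (h1 K Kks); apply: (mono _ (maxn N1 n0)) => //; exact: leq_maxl.
have [K Kks hK'] := hn N.
exact: hN K Kks hK'.
Qed.

Lemma finite_Wset (A : finType) (B : set (seq A)) y :
  star_tree B -> finite_set (Wset B y).
Proof.
move=> [_ [_ fl]].
apply: (@finite_preimage _ _ _ (fun j => y ++ j)) => //.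
by move=> a b _ _; exact: catIl.
Qed.

Section Subtree.
Variables (A : finType) (Omega : Type) (B : set (seq A))
  (M : seq A -> Omega -> set (seq A)) (Acoll : seq A -> set (set (seq A))).
Notation word := (seq A).
Hypothesis sB : star_tree B.
Hypothesis HM : forall x, B x -> forall w, M x w `<=` Wset B x.
Implicit Types (a b i j k x y : word).

Lemma Bnil : B [::]. Proof. by case: sB. Qed.

Lemma childT_up (Q T : set word) a b : star_subtree Q T -> childT Q a b ->
  childT T a b.
Proof.
move=> [_ [QT cl]] [Qa Qb ab h]; split; [exact: QT|exact: QT|by []|].
move=> k Tk ak kb; apply: (h k) => //; exact: cl Qb _ Tk kb.
Qed.

Lemma subtree_G w x Q : rtree M w x ->
  star_subtree Q (Defs.shift (rtree M w) x) -> is_A_tree (Ashift Acoll x) Q ->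
  forall n, Gev M Acoll n x w.
Proof.
move=> Sx sQ [tQ AQ] n.
suff H : forall i, Q i -> Gev M Acoll n (x ++ i) w.
  by rewrite -[x]cats0; apply: H; case: tQ.
elim: n => [//|n IH] i Qi /=.
exists (Wset Q i); split; [|split].
- move=> j /(WsetE _ Qi) ch.
  have := childT_up sQ ch => /shift_child /(S_childT_M Bnil HM) [j' [e Mj']].
  by rewrite catA in e; move/catIl: e => ->.
- exact: AQ.
- move=> j /(WsetE _ Qi) [_ Qij _ _].
  by rewrite -catA; apply: IH.
Qed.

Variable w : Omega.
Variable x : word.
Hypothesis Sx : rtree M w x.

Definition Good y := forall n, Gev M Acoll n y w.

Lemma finite_M y : rtree M w y -> finite_set (M y w).
Proof.
move=> Sy; apply: sub_finite_set (finite_Wset y sB).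
exact: HM (S_B Bnil HM Sy) w.
Qed.

Definition Kprop y K := K `<=` M y w /\ Acoll y K /\ forall j, K j -> Good (y ++ j).

Lemma pigeon y : rtree M w y -> Good y -> exists K, Kprop y K.
Proof.
move=> Sy Gy.
have [ms ems] := (finite_seqP _).1 (finite_M Sy).
pose phi n K := K `<=` M y w /\ Acoll y K /\ forall j, K j -> Gev M Acoll n (y ++ j) w.
have := @fin_antitone _ (subs ms) phi.
case.
- move=> n K [h1 [h2 h3]]; split => //; split => // j Kj.
  exact: Gev_dec (h3 j Kj).
- move=> n; have [K [KM [AK HK]]] := Gy n.+1.
  exists K => //; apply: subs_complete; by rewrite -ems.
- move=> K _ hK; exists K; split; first by case: (hK 0%N).
  split; first by case: (hK 0%N) => _ [].
  by move=> j Kj n; case: (hK n) => _ [_ ]; apply.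
Qed.

Definition Kc y : set word :=
  match pselect (exists K, Kprop y K) with
  | left e => proj1_sig (cid e)
  | right _ => set0
  end.

Lemma Kc_spec y : (exists K, Kprop y K) -> Kprop y (Kc y).
Proof.
rewrite /Kc; case: pselect => // e _.
exact: (proj2_sig (cid e)).
Qed.

Fixpoint Qlev (n : nat) : set word :=
  match n with
  | 0 => [set [::]]
  | n'.+1 => [set v | exists i j, Qlev n' i /\ Kc (x ++ i) j /\ v = i ++ j]
  end.

Definition Qt : set word := [set i | exists n, Qlev n i].

Hypothesis Gx : Good x.

Lemma Qlev_inv n i : Qlev n i -> rtree M w (x ++ i) /\ Good (x ++ i).
Proof.
elim: n i => [|n IH] i /=; first by move=> ->; rewrite cats0.
case=> i' [j [li [Kj ->]]].
have [Si Gi] := IH _ li.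
have [KM [_ KG]] := Kc_spec (pigeon Si Gi).
by rewrite catA; split; [apply: S_child Si (KM _ Kj)|apply: KG].
Qed.

Lemma Q_inv i : Qt i -> rtree M w (x ++ i) /\ Good (x ++ i).
Proof. by case=> n /Qlev_inv. Qed.

Lemma Kc_specQ i : Qt i -> Kprop (x ++ i) (Kc (x ++ i)).
Proof. by move=> /Q_inv [Si Gi]; apply: Kc_spec; exact: pigeon. Qed.

Lemma Q_shift : Qt `<=` Defs.shift (rtree M w) x.
Proof. by move=> i /Q_inv []. Qed.

Lemma Qchild_shift i j : Qt i -> Kc (x ++ i) j ->
  childT (Defs.shift (rtree M w) x) i (i ++ j).
Proof.
move=> Qi Kj; apply/shift_child; rewrite catA.
have [KM _] := Kc_specQ Qi.
by have := S_childT Bnil HM (Q_shift Qi) (KM _ Kj).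
Qed.

Lemma Q_step i j : Qt i -> Kc (x ++ i) j -> Qt (i ++ j).
Proof. by case=> n li Kj; exists n.+1; exists i, j. Qed.

Lemma Q_closed i k : Qt i -> Defs.shift (rtree M w) x k -> pprefix k i -> Qt k.
Proof.
case=> n; elim: n i => [|n IH] i /=; first by move=> -> _ /pp_nil.
case=> i' [j [li [Kj ->]]] Sk ki.
have Qi' : Qt i' by exists n.
have [_ _ i'i hmid] := Qchild_shift Qi' Kj.
case: (pp_tri ki i'i) => h.
- exact: IH li Sk h.
- by rewrite h.
- by case: (hmid k Sk h ki).
Qed.

Lemma Qchild i j : Qt i -> Kc (x ++ i) j -> childT Qt i (i ++ j).
Proof.
move=> Qi Kj; apply: (childT_sub Q_shift) => //; last exact: Qchild_shift.
exact: Q_step.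
Qed.

Lemma Qchild_Kc i j : Qt i -> childT Qt i (i ++ j) -> Kc (x ++ i) j.
Proof.
move=> Qi ch; have [_ [m lm] iij _] := ch.
case: m lm => [|m] /=.
  move=> e; move: iij; rewrite e.
  by rewrite (cat_nil_l e) => /pp_irr.
case=> i' [j' [li' [Kj' e]]].
have Qi' : Qt i' by exists m.
have ch' := Qchild Qi' Kj'.
rewrite -e in ch'.
have ii' := child_uniq ch ch'.
by subst i'; rewrite (catIl e).
Qed.

Lemma WsetQ i : Qt i -> Wset Qt i = Kc (x ++ i).
Proof.
move=> Qi; apply/seteqP; split => j.
  by move/(WsetE _ Qi); exact: Qchild_Kc.
by move=> Kj; apply/(WsetE _ Qi); exact: Qchild.
Qed.

Lemma Qlev_height n i : Qlev n i -> height Qt i = n.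
Proof.
elim: n i => [|n IH] i /=; first by move=> ->; rewrite height_nil.
case=> i' [j [li [Kj ->]]].
have Qi' : Qt i' by exists n.
by rewrite (height_child (Qchild Qi' Kj)) (IH _ li).
Qed.

Lemma Qlev_finite n : finite_set (Qlev n).
Proof.
elim: n => [|n IH] /=; first exact: finite_set1.
apply: (@sub_finite_set _ _ (\bigcup_(i in Qlev n) (fun j => i ++ j) @` Kc (x ++ i))).
  by move=> v [i [j [li [Kj ->]]]]; exists i => //; exists j.
apply: bigcup_finite => // i li; apply: finite_image.
have Qi : Qt i by exists n.
have [KM _] := Kc_specQ Qi.
exact: (sub_finite_set KM (finite_M (Q_inv Qi).1)).
Qed.

Lemma Q_star : star_tree Qt.
Proof.
split; first by exists 0%N.
split.
  move=> i [[|m] /=]; first by move=> ->.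
  case=> i' [j [li [Kj ->]]] _.
  have Qi' : Qt i' by exists m.
  have ch := Qchild Qi' Kj.
  exists i'; split.
    split => //; split; first by case: ch.
    by rewrite (height_child ch).
  move=> j0 [Qj0 [pj0 hj0]].
  have ch0 := child_of_height Qj0 (Q_step Qi' Kj) pj0 (esym hj0).
  exact: child_uniq ch ch0.
move=> n; apply: sub_finite_set (Qlev_finite n).
move=> i [[m lm] hi].
by move: (Qlev_height lm); rewrite hi => ->.
Qed.

Lemma G_subtree : exists Q, star_subtree Q (Defs.shift (rtree M w) x) /\
  is_A_tree (Ashift Acoll x) Q.
Proof.
exists Qt; split.
  split; first exact: Q_star.
  split; first exact: Q_shift.
  move=> i Qi k Sk ki; exact: Q_closed Qi Sk ki.
split; first exact: Q_star.
move=> i Qi; rewrite /Ashift WsetQ //.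
by have [_ []] := Kc_specQ Qi.
Qed.

End Subtree.

Local Open Scope ring_scope.


Lemma setU1_inj (T : Type) (z : T) (E1 E2 : set T) : ~ E1 z -> ~ E2 z ->
  z |` E1 = z |` E2 -> E1 = E2.
Proof.
move=> n1 n2 e; apply/seteqP; split => k Ek.
  have : (z |` E2) k by rewrite -e; right.
  by case => // kz; move: n1; rewrite -kz.
have : (z |` E1) k by rewrite e; right.
by case => // kz; move: n2; rewrite -kz.
Qed.

Lemma subs_uniq (T : choiceType) (s : seq T) : uniq s -> uniq (subs s).
Proof.
elim: s => [//|z s IH] /= /andP[zs us].
rewrite cat_uniq IH //=; apply/andP; split.
  apply/hasPn => E /mapP[E' E's ->].
  apply/negP => /subs_sub /(_ z (or_introl erefl)) /= zin.
  by rewrite zin in zs.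
rewrite map_inj_in_uniq ?IH // => E1 E2 /subs_sub h1 /subs_sub h2 e.
apply: (setU1_inj _ _ e).
  by move/h1 => /= zin; rewrite zin in zs.
by move/h2 => /= zin; rewrite zin in zs.
Qed.

Section Prob.
Variables (A : finType) (R : realType) (d : measure_display)
  (Omega : measurableType d) (P : probability Omega R)
  (B : set (seq A)) (M : seq A -> Omega -> set (seq A)).
Notation word := (seq A).
Hypothesis sB : star_tree B.
Hypothesis HM : forall x, B x -> forall w, M x w `<=` Wset B x.
Hypothesis Hmeas : offspring_measurable B M.
Hypothesis Hind : offspring_independent P B M.
Implicit Types (U V : seq word) (E F X : set Omega).

Definition det U E := forall w w', (forall y, y \in U -> M y w = M y w') ->
  E w -> E w'.

Lemma det_sub U V E : det U E -> {subset U <= V} -> det V E.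
Proof. by move=> h s w w' hw; apply: h => y /s; exact: hw. Qed.

Lemma det_undup U E : det U E -> det (undup U) E.
Proof. by move=> h; apply: det_sub h _ => y; rewrite mem_undup. Qed.

Lemma det_I U V E F : det U E -> det V F -> det (U ++ V) (E `&` F).
Proof.
move=> hE hF w w' hw [Ew Fw]; split.
  by apply: hE Ew => y yU; apply: hw; rewrite mem_cat yU.
by apply: hF Fw => y yV; apply: hw; rewrite mem_cat yV orbT.
Qed.

Lemma det_C U E : det U E -> det U (~` E).
Proof.
move=> h w w' hw nE E'; apply: nE; apply: h E' => y yU.
by rewrite hw.
Qed.

Lemma det_atom y D : det [:: y] [set w | M y w = D].
Proof. by move=> w w' hw /= <-; rewrite hw // mem_head. Qed.

Lemma det_nil E : det [::] E -> E = set0 \/ E = setT.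
Proof.
move=> h; case: (pselect (exists w, E w)) => [[w0 Ew0]|ne].
  right; apply/seteqP; split => // w _; exact: h Ew0.
left; apply/seteqP; split => // w Ew; apply: ne; by exists w.
Qed.

Lemma Pfin X : measurable X -> P X \is a fin_num.
Proof. exact: fin_num_measure. Qed.

Lemma finite_Mw y w : B y -> finite_set (M y w).
Proof. by move=> By; apply: sub_finite_set (finite_Wset y sB); exact: HM. Qed.

Definition Esec y U E (D : set word) : set Omega :=
  [set w | exists w', [/\ M y w' = D, (forall z, z \in U -> M z w' = M z w) & E w']].

Lemma det_Esec y U E D : det U (Esec y U E D).
Proof.
move=> w1 w2 h12 [w' [e1 e2 e3]]; exists w'; split => // z zU.
by rewrite e2 // h12.
Qed.

Lemma Esec_eq y U E D : det (y :: U) E ->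
  [set w | M y w = D] `&` E = [set w | M y w = D] `&` Esec y U E D.
Proof.
move=> h; apply/seteqP; split => w [/= eD Ew]; split => //.
  by exists w; split.
case: Ew => w' [e1 e2 e3]; apply: h e3 => z; rewrite in_cons => /orP[/eqP ->|zU].
  by rewrite e1 eD.
exact: e2.
Qed.

Lemma det_measurable U E : (forall y, y \in U -> B y) -> det U E -> measurable E.
Proof.
elim: U E => [|y U IH] E hB hE.
  by case: (det_nil hE) => ->.
have By : B y by apply: hB; exact: mem_head.
have -> : E = \bigcup_(s : seq word) ([set w | M y w = [set` s]] `&` Esec y U E [set` s]).
  apply/seteqP; split => [w Ew|w [s _ hs]].
    have [s es] := (finite_seqP _).1 (finite_Mw w By).
    exists s => //; rewrite -(Esec_eq _ hE); split => //.
  have : ([set w | M y w = [set` s]] `&` E) w by rewrite (Esec_eq _ hE).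
  by case.
apply: countable_bigcupT_measurable; first exact: countableP.
move=> s; apply: measurableI; first exact: Hmeas.
apply: IH; last exact: det_Esec.
by move=> z zU; apply: hB; rewrite in_cons zU orbT.
Qed.

Definition Wseq y : seq word := enum_fset (fset_set (Wset B y)).

Lemma Wseq_uniq y : uniq (Wseq y).
Proof. exact: fset_uniq. Qed.

Lemma Wseq_set y : [set` Wseq y] = Wset B y.
Proof.
apply/seteqP; split => j /=.
  by rewrite in_fset_set ?inE //; exact: finite_Wset.
by move=> h; rewrite in_fset_set ?inE //; exact: finite_Wset.
Qed.

Lemma DEC y X : B y -> measurable X ->
  fine (P X) = \sum_(D <- subs (Wseq y)) fine (P ([set w | M y w = D] `&` X)).
Proof.
move=> By mX.
have mF : forall D, measurable ([set w | M y w = D] `&` X).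
  by move=> D; apply: measurableI => //; exact: Hmeas.
rewrite sum_fine; last by move=> D _; apply: Pfin.
congr fine.
rewrite fsbig_seq; last exact/subs_uniq/Wseq_uniq.
rewrite -measure_fin_bigcup //.
- congr (P _); apply/seteqP; split => [w Xw|w [D _ [_ Xw]] //].
  exists (M y w) => //=; apply: subs_complete; rewrite Wseq_set; exact: HM.
- move=> D1 D2 _ _ [w [[/= e1 _] [/= e2 _]]].
  by rewrite -e1 -e2.
Qed.

Definition atom (T : seq word) (c : word -> set word) : set Omega :=
  \big[setI/setT]_(y <- T) [set w | M y w = c y].

Lemma atom_meas T c : (forall y, y \in T -> B y) -> measurable (atom T c).
Proof.
elim: T => [|y T IH] hB; first by rewrite /atom big_nil.
rewrite /atom big_cons; apply: measurableI.
  by apply: Hmeas; apply: hB; exact: mem_head.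
by apply: IH => z zT; apply: hB; rewrite in_cons zT orbT.
Qed.

Lemma atom_eq T c c' : (forall y, y \in T -> c y = c' y) -> atom T c = atom T c'.
Proof. by move=> h; apply: eq_big_seq => y yT; rewrite h. Qed.

Lemma atom1 y c : atom [:: y] c = [set w | M y w = c y].
Proof. by rewrite /atom big_seq1. Qed.

Lemma Patom T c : uniq T -> (forall y, y \in T -> B y) ->
  fine (P (atom T c)) = \prod_(y <- T) fine (P [set w | M y w = c y]).
Proof. by move=> uT hB; apply: Hind. Qed.

Lemma AL_uniq V : uniq V -> (forall y, y \in V -> B y) -> forall F, det V F ->
  forall T c, uniq T -> (forall y, y \in T -> B y) -> (forall y, y \in T -> y \notin V) ->
  fine (P (atom T c `&` F)) = fine (P (atom T c)) * fine (P F).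
Proof.
elim: V => [|v V IH] uV hBV F hF T c uT hBT disj.
  case: (det_nil hF) => ->; first by rewrite setI0 measure0 mulr0.
  by rewrite setIT probability_setT mulr1.
have Bv : B v by apply: hBV; exact: mem_head.
move: uV => /= /andP[vV uV].
have hBV' : forall y, y \in V -> B y by move=> y yV; apply: hBV; rewrite in_cons yV orbT.
have vT : v \notin T by apply/negP => /disj; rewrite mem_head.
have mF : measurable F by exact: (det_measurable hBV hF).
have mE : forall D, measurable (Esec v V F D).
  by move=> D; exact: (det_measurable hBV' (@det_Esec v V F D)).
rewrite (DEC Bv); last by apply: measurableI => //; exact: atom_meas.
rewrite [fine (P F)](DEC Bv) // big_distrr /=.
apply: eq_big_seq => D _.
pose cD := fun y => if y == v then D else c y.
have eT : atom T cD = atom T c.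
  apply: atom_eq => y yT; rewrite /cD; case: eqP => // yv.
  by move: vT; rewrite -yv yT.
have eA : atom (v :: T) cD = [set w | M v w = D] `&` atom T c.
  rewrite -eT /atom big_cons /cD eqxx //.
have e1 : [set w | M v w = D] `&` (atom T c `&` F) = atom (v :: T) cD `&` Esec v V F D.
  by rewrite eA setICA (Esec_eq _ hF) setICA setIA.
have uvT : uniq (v :: T) by rewrite /= vT.
have hBvT : forall y, y \in v :: T -> B y.
  by move=> y; rewrite in_cons => /orP[/eqP ->|]; [|apply: hBT].
rewrite e1 IH //; last first.
  move=> y; rewrite in_cons => /orP[/eqP ->|/disj] //.
  by rewrite in_cons negb_or => /andP[].
  exact: det_Esec.
have e2 := IH uV hBV' _ (@det_Esec v V F D) [:: v] (fun _ => D) erefl.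
rewrite atom1 in e2.
rewrite (Esec_eq _ hF) e2 //; last by move=> y; rewrite mem_seq1 => /eqP ->.
  rewrite Patom // big_cons /cD eqxx -(@eq_big_seq _ _ _ _ _ (fun y => fine (P [set w | M y w = c y]))).
    by rewrite -Patom // [fine (P [set w | M v w = D]) * _]mulrC -mulrA.
  move=> y yT; rewrite ifF //; apply/negP => /eqP yv.
  by move: vT; rewrite -yv yT.
by move=> y; rewrite mem_seq1 => /eqP ->.
Qed.

Lemma AL V F T c : (forall y, y \in V -> B y) -> det V F ->
  uniq T -> (forall y, y \in T -> B y) -> (forall y, y \in T -> y \notin V) ->
  fine (P (atom T c `&` F)) = fine (P (atom T c)) * fine (P F).
Proof.
move=> hBV hF uT hBT disj.
apply: (@AL_uniq (undup V)) => //.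
- exact: undup_uniq.
- by move=> y; rewrite mem_undup; apply: hBV.
- exact: det_undup.
- by move=> y /disj; rewrite mem_undup.
Qed.

Lemma indep_uniq U : uniq U -> (forall y, y \in U -> B y) -> forall V E F,
  (forall y, y \in V -> B y) -> (forall y, y \in U -> y \notin V) ->
  det U E -> det V F -> fine (P (E `&` F)) = fine (P E) * fine (P F).
Proof.
elim: U => [|u U IH] uU hBU V E F hBV disj hE hF.
  case: (det_nil hE) => ->; first by rewrite set0I measure0 mul0r.
  by rewrite setTI probability_setT mul1r.
move: uU => /= /andP[uU' uU].
have Bu : B u by apply: hBU; exact: mem_head.
have hBU' : forall y, y \in U -> B y by move=> y yU; apply: hBU; rewrite in_cons yU orbT.
have mE : measurable E by exact: (det_measurable hBU hE).
have mF : measurable F by exact: (det_measurable hBV hF).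
have mEs : forall D, measurable (Esec u U E D).
  by move=> D; exact: (det_measurable hBU' (@det_Esec u U E D)).
rewrite (DEC Bu); last exact: measurableI.
rewrite [fine (P E)](DEC Bu) // big_distrl /=.
apply: eq_big_seq => D _.
have hUV : forall y, y \in U ++ V -> B y.
  by move=> y; rewrite mem_cat => /orP[]; [apply: hBU'|apply: hBV].
have uUV : u \notin U ++ V.
  rewrite mem_cat negb_or uU' /=; apply: disj; exact: mem_head.
rewrite setIA (Esec_eq _ hE) -setIA -(atom1 u (fun _ => D)).
rewrite (@AL (U ++ V)) //; last first.
- by move=> y; rewrite mem_seq1 => /eqP ->.
- by move=> y; rewrite mem_seq1 => /eqP ->; apply: Bu.
- exact: det_I (@det_Esec u U E D) hF.
rewrite (IH uU hBU' V) //; last exact: det_Esec.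
  rewrite (@AL U) //; last first.
  - by move=> y; rewrite mem_seq1 => /eqP ->.
  - by move=> y; rewrite mem_seq1 => /eqP ->; apply: Bu.
  - exact: det_Esec.
  by rewrite mulrA.
by move=> y yU; apply: disj; rewrite in_cons yU orbT.
Qed.

Lemma indep U V E F : (forall y, y \in U -> B y) -> (forall y, y \in V -> B y) ->
  (forall y, y \in U -> y \notin V) ->
  det U E -> det V F -> fine (P (E `&` F)) = fine (P E) * fine (P F).
Proof.
move=> hBU hBV disj hE hF.
apply: (@indep_uniq (undup U)) hBV _ _ hF => //.
- exact: undup_uniq.
- by move=> y; rewrite mem_undup; apply: hBU.
- by move=> y; rewrite mem_undup; apply: disj.
- exact: det_undup.
Qed.

End Prob.


Section Frec.
Variables (R : realType) (T : choiceType).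

Fixpoint frec (ds : seq T) (p : T -> R) (h : set T -> bool) : R :=
  match ds with
  | [::] => (h set0)%:R
  | z :: ds' => p z * frec ds' p (fun E => h (z |` E)) + (1 - p z) * frec ds' p h
  end.

Lemma frec_true ds p : frec ds p (fun _ => true) = 1.
Proof. by elim: ds => [//|z ds IH] /=; rewrite IH !mulr1 addrC subrK. Qed.

Lemma frec_ge0 ds p h : (forall j, j \in ds -> 0 <= p j <= 1) -> 0 <= frec ds p h.
Proof.
elim: ds h => [|z ds IH] h hp /=; first by case: (h set0).
have /andP[p0 p1] := hp z (mem_head _ _).
have hp' : forall j, j \in ds -> 0 <= p j <= 1 by move=> j jd; apply: hp; rewrite in_cons jd orbT.
apply: addr_ge0; apply: mulr_ge0; rewrite ?subr_ge0 //; exact: IH.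
Qed.

Lemma frec_hmono ds p (h1 h2 : set T -> bool) : (forall j, j \in ds -> 0 <= p j <= 1) ->
  (forall E, E `<=` [set` ds] -> h1 E -> h2 E) -> frec ds p h1 <= frec ds p h2.
Proof.
elim: ds h1 h2 => [|z ds IH] h1 h2 hp hh /=.
  by case: (boolP (h1 set0)) => [/(hh _ (sub0set _)) ->|_] //; case: (h2 set0).
have /andP[p0 p1] := hp z (mem_head _ _).
have hp' : forall j, j \in ds -> 0 <= p j <= 1 by move=> j jd; apply: hp; rewrite in_cons jd orbT.
apply: lerD; apply: ler_wpM2l; rewrite ?subr_ge0 //; apply: IH => // E Eds.
  apply: hh => k [->|/Eds /= kd]; first by rewrite /= mem_head.
  by rewrite /= in_cons kd orbT.
apply: hh => k /Eds /= kd; by rewrite in_cons kd orbT.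
Qed.

Lemma frec_mono ds p p' (h : set T -> bool) : (forall j, j \in ds -> 0 <= p' j <= p j /\ p j <= 1) ->
  (forall E E', E `<=` E' -> E' `<=` [set` ds] -> h E' -> h E) ->
  frec ds p h <= frec ds p' h.
Proof.
elim: ds h => [//|z ds IH] h hp hh /=.
have [/andP[p'0 p'p] p1] := hp z (mem_head _ _).
have hp' : forall j, j \in ds -> 0 <= p' j <= p j /\ p j <= 1.
  by move=> j jd; apply: hp; rewrite in_cons jd orbT.
have hpp : forall j, j \in ds -> 0 <= p j <= 1.
  move=> j /hp' [/andP[a b] c]; apply/andP; split => //; exact: le_trans b.
have sub1 : forall E, E `<=` [set` ds] -> z |` E `<=` [set` z :: ds].
  move=> E Eds k [->|/Eds /= kd]; first by rewrite /= mem_head.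
  by rewrite /= in_cons kd orbT.
have F10 : frec ds p (fun E => h (z |` E)) <= frec ds p h.
  apply: frec_hmono => // E Eds; apply: hh; last exact: sub1.
  by move=> k Ek; right.
have IH1 : frec ds p (fun E => h (z |` E)) <= frec ds p' (fun E => h (z |` E)).
  apply: IH => // E E' EE' E'ds; apply: hh; last exact: sub1.
  by move=> k [->|/EE' Ek]; [left|right].
have IH0 : frec ds p h <= frec ds p' h.
  apply: IH => // E E' EE' E'ds; apply: hh => // k /E'ds /= kd.
  by rewrite in_cons kd orbT.
nra.
Qed.

Lemma frec_marg ds p (D : set T) (h : set T -> bool) :
  frec ds p (fun E => h (D `&` E)) = frec [seq j <- ds | `[< D j >]] p h.
Proof.
elim: ds h => [|z ds IH] h /=; first by rewrite setI0.
case: (asboolP (D z)) => Dz /=.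
  rewrite -IH -[in RHS]IH; congr (_ * frec _ _ _ + _).
  apply: funext => E; congr h; apply/seteqP; split.
    by move=> k [Dk [->|Ek]]; [left|right].
  by move=> k [->|[Dk Ek]]; split => //; [left|right].
have -> : (fun E => h (D `&` (z |` E))) = (fun E => h (D `&` E)).
  apply: funext => E; congr h; apply/seteqP; split.
    by move=> k [Dk [kz|Ek]] //; move: Dz; rewrite -kz.
  by move=> k [Dk Ek]; split => //; right.
by rewrite IH -mulrDl addrC subrK mul1r.
Qed.

Lemma set_cons (z : T) (ws : seq T) : [set` z :: ws] = z |` [set` ws].
Proof.
apply/seteqP; split => k /=; first by rewrite in_cons => /orP[/eqP ->|kw]; [left|right].
by case=> [->|/= kw]; rewrite in_cons ?eqxx // kw orbT.
Qed.

Lemma conv ws (h : set T -> bool) (s : R) : uniq ws ->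
  \sum_(E <- subs ws) ((1 - s) ^+ Defs.fcard E * s ^+ Defs.fcard ([set` ws] `\` E)) * (h E)%:R
  = frec ws (fun _ => 1 - s) h.
Proof.
elim: ws h => [|z ws IH] h /=.
  move=> _; rewrite big_seq1 fcard0.
  have -> : [set` [::]] `\` (set0 : set T) = set0.
    by apply/seteqP; split => k //= [].
  by rewrite fcard0 !expr0 !mul1r.
move=> /andP[zws uws].
rewrite big_cat big_map /=.
have nzE : forall E, E \in subs ws -> ~ E z.
  by move=> E /subs_sub h1 /h1 /= zin; rewrite zin in zws.
have fE : forall E, E \in subs ws -> finite_set E.
  by move=> E /subs_sub h1; exact: sub_finite_set h1 (finite_seq _).
have e1 : \sum_(E <- subs ws) ((1 - s) ^+ Defs.fcard E * s ^+ Defs.fcard ([set` z :: ws] `\` E)) * (h E)%:R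
    = \sum_(E <- subs ws) s * (((1 - s) ^+ Defs.fcard E * s ^+ Defs.fcard ([set` ws] `\` E)) * (h E)%:R).
  apply: eq_big_seq => E Es; rewrite set_cons.
  have -> : (z |` [set` ws]) `\` E = z |` ([set` ws] `\` E).
    apply/seteqP; split => k.
      by move=> [[->|kw] kE]; [left|right].
    by move=> [->|[kw kE]]; split; [left| exact: nzE|right|].
  rewrite fcard_U1; last by move=> [/= zin _]; rewrite zin in zws.
    by rewrite exprS; ring.
  exact: finite_setD.
have e2 : \sum_(E <- subs ws) ((1 - s) ^+ Defs.fcard (z |` E) * s ^+ Defs.fcard ([set` z :: ws] `\` (z |` E))) * (h (z |` E))%:R
    = \sum_(E <- subs ws) (1 - s) * (((1 - s) ^+ Defs.fcard E * s ^+ Defs.fcard ([set` ws] `\` E)) * (h (z |` E))%:R).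
  apply: eq_big_seq => E Es; rewrite set_cons.
  have -> : (z |` [set` ws]) `\` (z |` E) = [set` ws] `\` E.
    apply/seteqP; split => k.
      move=> [[->|kw] kE]; first by case: kE; left.
      by split => // kE'; apply: kE; right.
    move=> [kw kE]; split; first by right.
    case=> // kz; move: kw; rewrite kz /= => zin; by rewrite zin in zws.
  rewrite fcard_U1; [by rewrite exprS; ring|exact: fE|exact: nzE].
rewrite e1 e2.
rewrite -!big_distrr /= IH // (IH (fun E => h (z |` E))) //.
ring.
Qed.

End Frec.


Section Main.
Variables (A : finType) (R : realType) (d : measure_display)
  (Omega : measurableType d) (P : probability Omega R)
  (B : set (seq A)) (M : seq A -> Omega -> set (seq A))
  (Acoll : seq A -> set (set (seq A))).
Notation word := (seq A).
Hypothesis sB : star_tree B.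
Hypothesis HM : forall x, B x -> forall w, M x w `<=` Wset B x.
Hypothesis Hmeas : offspring_measurable B M.
Hypothesis Hind : offspring_independent P B M.
Implicit Types (a b i j k x y z : word).

Let Bnil : B [::] := Bnil sB.

Definition Uset n y := [set z | B z /\ prefix y z /\ (height B z < height B y + n)%N].

Lemma finite_Uset n y : finite_set (Uset n y).
Proof.
apply: (@sub_finite_set _ _ (\bigcup_(k in `I_(height B y + n)) level B k)).
  by move=> z [Bz [_ hz]]; exists (height B z).
apply: bigcup_finite; first exact: finite_II.
by move=> k _; case: sB => _ [].
Qed.

Definition Useq n y : seq word := enum_fset (fset_set (Uset n y)).

Lemma memU n y z : (z \in Useq n y) <-> Uset n y z.
Proof.
rewrite /Useq -[z \in enum_fset _]/(z \in fset_set (Uset n y)).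
by rewrite in_fset_set ?inE //; exact: finite_Uset.
Qed.

Definition Anc y : seq word := enum_fset (fset_set (PP B y)).

Lemma memAnc y z : (z \in Anc y) <-> PP B y z.
Proof.
rewrite /Anc -[z \in enum_fset _]/(z \in fset_set (PP B y)).
by rewrite in_fset_set ?inE //; exact: finite_PP.
Qed.

Lemma det_G n y : B y -> det M (Useq n y) (Gev M Acoll n y).
Proof.
elim: n y => [//|n IH] y By w w' hw /= [K [KM [AK HK]]].
have ey : M y w = M y w'.
  apply: hw; apply/memU; split => //; split; first exact: prefix_refl.
  by rewrite addnS ltnS leq_addr.
exists K; split; first by rewrite -ey.
split => // j Kj.
have Wj := HM By (KM _ Kj).
have [Byj hyj] := Wj.
apply: (IH _ Byj w) (HK j Kj) => z /memU [Bz [pz hz]].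
apply: hw; apply/memU; split => //; split.
  exact: prefix_trans' (prefix_prefix y j) pz.
by move: hz; rewrite hyj addSn addnS.
Qed.

Lemma det_S y : det M (Anc y) [set w | rtree M w y].
Proof.
move=> w w' hw /rtreeP [n]; elim: n y hw => [|n IH] y hw /=.
  by move=> ->; exact: S_nil.
case=> a [j [la [Mj ey]]]; subst y.
have Sa : rtree M w a by apply/rtreeP; exists n.
have [Ba _ ab _] := S_childB Bnil HM Sa Mj.
have Sa' : rtree M w' a.
  apply: IH la => z /memAnc [Bz za]; apply: hw; apply/memAnc; split => //.
  exact: pp_trans za ab.
apply: S_child Sa' _.
have <- // : M a w = M a w'.
by apply: hw; apply/memAnc.
Qed.

Let indep' := indep sB HM Hmeas Hind.
Let detm := det_measurable sB HM Hmeas.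

Lemma det_good (ds : seq word) (X : word -> set Omega) (UX : word -> seq word)
  (h : set word -> bool) :
  (forall j, j \in ds -> det M (UX j) (X j)) ->
  det M (flatten (map UX ds)) [set w | h [set j | j \in ds /\ X j w]].
Proof.
move=> hX w w' hw /=.
suff -> : [set j | j \in ds /\ X j w'] = [set j | j \in ds /\ X j w] by [].
have hin : forall j y, j \in ds -> y \in UX j -> y \in flatten (map UX ds).
  by move=> j y jd yU; apply/flattenP; exists (UX j) => //; apply: map_f.
apply/seteqP; split => j [jd Xj]; split => //.
  by apply: (hX j jd w' w) Xj => y yU; rewrite (hw y) // (hin j).
by apply: (hX j jd w w') Xj => y yU; rewrite (hw y) // (hin j).
Qed.

Lemma Pfin' E : measurable E -> P E \is a fin_num.
Proof. exact: Pfin. Qed.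

Lemma prob_frec (ds : seq word) (X : word -> set Omega) (UX : word -> seq word) :
  uniq ds ->
  (forall j, j \in ds -> (forall y, y \in UX j -> B y) /\ det M (UX j) (X j)) ->
  (forall j1 j2, j1 \in ds -> j2 \in ds -> j1 != j2 -> forall y, y \in UX j1 -> y \notin UX j2) ->
  forall V Z (h : set word -> bool), (forall y, y \in V -> B y) -> det M V Z ->
  (forall j, j \in ds -> forall y, y \in UX j -> y \notin V) ->
  fine (P (Z `&` [set w | h [set j | j \in ds /\ X j w]])) =
  fine (P Z) * frec ds (fun j => fine (P (X j))) h.
Proof.
elim: ds => [|z ds IH] uds hX hdisj V Z h hBV hZ hZd /=.
  have e0 : forall w, [set j | j \in [::] /\ X j w] = set0.
    by move=> w; apply/seteqP; split => j // [].
  have -> : [set w | h [set j | j \in [::] /\ X j w]] = if h set0 then setT else set0.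
    by apply/seteqP; split => w; rewrite /= e0; case: (h set0).
  by case: (h set0); rewrite ?setIT ?setI0 ?measure0 /= ?mulr1 ?mulr0.
move: uds => /= /andP[zds uds].
have [hBz hXz] := hX z (mem_head _ _).
have hX' : forall j, j \in ds -> (forall y, y \in UX j -> B y) /\ det M (UX j) (X j).
  by move=> j jd; apply: hX; rewrite in_cons jd orbT.
have hdisj' : forall j1 j2, j1 \in ds -> j2 \in ds -> j1 != j2 -> forall y, y \in UX j1 -> y \notin UX j2.
  by move=> j1 j2 j1d j2d; apply: hdisj; rewrite in_cons ?j1d ?j2d orbT.
have mZ : measurable Z by exact: detm hBV hZ.
have mXz : measurable (X z) by exact: detm hBz hXz.
have hBVz : forall y, y \in V ++ UX z -> B y.
  by move=> y; rewrite mem_cat => /orP[]; [apply: hBV|apply: hBz].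
have hZd' : forall j, j \in ds -> forall y, y \in UX j -> y \notin V ++ UX z.
  move=> j jd y yU; rewrite mem_cat negb_or; apply/andP; split.
    by apply: (hZd j) => //; rewrite in_cons jd orbT.
  apply: (hdisj j z) => //; first by rewrite in_cons jd orbT.
    exact: mem_head.
  by apply/negP => /eqP ej; move: zds; rewrite -ej jd.
pose Y := Z `&` [set w | h [set j | j \in z :: ds /\ X j w]].
have mY : measurable Y.
  apply: measurableI => //.
  apply: (detm (U := flatten (map UX (z :: ds)))); last first.
    by apply: det_good => j /hX [].
  move=> y /flattenP [s /mapP [j jd ->] yU]; exact: (hX j jd).1.
have e1 : Y `&` X z = (Z `&` X z) `&` [set w | (fun E => h (z |` E)) [set j | j \in ds /\ X j w]].
  apply/seteqP; split => w.
    move=> [[Zw hw] Xw]; split => //=.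
    suff <- : [set j | j \in z :: ds /\ X j w] = z |` [set j | j \in ds /\ X j w] by [].
    apply/seteqP; split => j.
      by move=> [] /=; rewrite in_cons => /orP[/eqP ->|jd] Xj; [left|right].
    by move=> [->|[jd Xj]]; split => //; rewrite in_cons ?eqxx ?jd ?orbT.
  move=> [[Zw Xw] /= hw]; split => //; split => //=.
  suff -> : [set j | j \in z :: ds /\ X j w] = z |` [set j | j \in ds /\ X j w] by [].
  apply/seteqP; split => j.
    by move=> [] /=; rewrite in_cons => /orP[/eqP ->|jd] Xj; [left|right].
  by move=> [->|[jd Xj]]; split => //; rewrite in_cons ?eqxx ?jd ?orbT.
have e2 : Y `\` X z = (Z `&` ~` X z) `&` [set w | h [set j | j \in ds /\ X j w]].
  have eq : forall w, ~ X z w -> [set j | j \in z :: ds /\ X j w] = [set j | j \in ds /\ X j w].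
    move=> w nX; apply/seteqP; split => j.
      move=> [] /=; rewrite in_cons => /orP[/eqP ->|jd] Xj //.
    by move=> [jd Xj]; split => //; rewrite in_cons jd orbT.
  apply/seteqP; split => w.
    by move=> [[Zw hw] nX]; split => //=; rewrite -(eq w nX).
  by move=> [[Zw nX] /= hw]; split => //; split => //=; rewrite (eq w nX).
rewrite (measureDI P mY mXz) fineD; [|apply: Pfin; exact: measurableD|apply: Pfin; exact: measurableI].
rewrite e1 e2.
rewrite (IH uds hX' hdisj' (V ++ UX z) (Z `&` X z) (fun E => h (z |` E))) //; last exact: (det_I hZ hXz).
rewrite (IH uds hX' hdisj' (V ++ UX z) (Z `&` ~` X z)) //; last exact: (det_I hZ (det_C hXz)).
rewrite (indep' hBV hBz _ hZ hXz); last by move=> y yV; apply/negP => /(hZd z (mem_head _ _)); rewrite yV.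
rewrite (indep' hBV hBz _ hZ (det_C hXz)); last by move=> y yV; apply/negP => /(hZd z (mem_head _ _)); rewrite yV.
rewrite probability_setC // fineB //; [|exact: Pfin].
rewrite /=; ring.
Qed.

Notation Bp := (Bprime P B M).
Notation Sev y := [set w | rtree M w y].

Lemma Anc_B y z : z \in Anc y -> B z.
Proof. by move/memAnc => []. Qed.

Lemma U_B n y z : z \in Useq n y -> B z.
Proof. by move/memU => []. Qed.

Lemma mS y : measurable (Sev y).
Proof. exact: (detm (@Anc_B y) (@det_S y)). Qed.

Lemma mG n y : B y -> measurable (Gev M Acoll n y).
Proof. by move=> By; exact: (detm (@U_B n y) (@det_G n y By)). Qed.

Lemma PE X : measurable X -> P X = (fine (P X))%:E.
Proof. by move=> mX; rewrite fineK //; exact: Pfin. Qed.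

Lemma fP_ge0 X : 0 <= fine (P X).
Proof. exact/fine_ge0/measure_ge0. Qed.

Lemma fP_le1 X : measurable X -> fine (P X) <= 1.
Proof.
move=> mX; have := probability_le1 P mX.
by rewrite (PE mX) lee_fin.
Qed.

Lemma fP_le X Y : measurable X -> measurable Y -> X `<=` Y -> fine (P X) <= fine (P Y).
Proof.
move=> mX mY XY; apply: fine_le; [exact: Pfin|exact: Pfin|].
exact: (le_measure P (mem_set mX) (mem_set mY) XY).
Qed.

Lemma Bp_pos y : Bp y -> 0 < fine (P (Sev y)).
Proof. by move=> [_ h]; move: h; rewrite (PE (mS y)) lte_fin. Qed.

Lemma Bp_B y : Bp y -> B y.
Proof. by case. Qed.

Lemma Bp_prefix z k : Bp z -> B k -> pprefix k z -> Bp k.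
Proof.
move=> Bz Bk kz; split => //; rewrite (PE (mS k)) lte_fin.
apply: (lt_le_trans (Bp_pos Bz)); apply: fP_le; try exact: mS.
move=> w /= Sz; have := @S_prefix_closed _ _ _ _ Bnil HM w z k Sz Bk kz. done.
Qed.

Lemma height_Bp z : Bp z -> height Bp z = height B z.
Proof.
move=> Bz; rewrite !heightE; congr Defs.fcard; apply/seteqP; split => k [Bk kz]; split => //.
  exact: Bp_B.
exact: Bp_prefix Bz Bk kz.
Qed.

Lemma disj_Anc_y y : y \notin Anc y.
Proof. by apply/negP => /memAnc [_ /pp_irr]. Qed.

Lemma children y D : Bp y -> D \in subs (Wseq B y) ->
  0 < fine (P [set w | M y w = D]) -> D `<=` Wset Bp y.
Proof.
move=> By Ds pos j Dj.
have By' := Bp_B By.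
have DW : D `<=` Wset B y by rewrite -(Wseq_set sB); exact: subs_sub.
have [Byj hyj] := DW _ Dj.
have Bpj : Bp (y ++ j).
  split => //; rewrite (PE (mS _)) lte_fin.
  have mD : measurable [set w | M y w = D] by exact: Hmeas.
  have e : fine (P (Sev y `&` [set w | M y w = D])) =
      fine (P (Sev y)) * fine (P [set w | M y w = D]).
    apply: (indep' (@Anc_B y) (V := [:: y]) _ _ (@det_S y) (@det_atom _ _ _ M y D)).
      by move=> z; rewrite mem_seq1 => /eqP ->.
    by move=> z zA; rewrite mem_seq1; apply/eqP => ezy; move: zA; rewrite ezy; apply/negP; exact: disj_Anc_y.
  apply: (@lt_le_trans _ _ (fine (P (Sev y `&` [set w | M y w = D])))).
    by rewrite e; apply: mulr_gt0 => //; exact: Bp_pos.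
  apply: fP_le; [exact: measurableI (mS y) mD|exact: mS|].
  by move=> w [/= Sy My]; apply: S_child Sy _; rewrite My.
split => //; rewrite height_Bp // height_Bp //.
Qed.

Lemma subs_W y : [set D | D `<=` Wset B y] = [set` subs (Wseq B y)].
Proof.
apply/seteqP; split => D /=.
  by move=> DW; apply: subs_complete; rewrite (Wseq_set sB).
by move/subs_sub; rewrite (Wseq_set sB).
Qed.

Definition wt y s (E : set word) : R :=
  (1 - s) ^+ Defs.fcard E * s ^+ Defs.fcard (Wset B y `\` E).

Lemma thinned_eq y s : thinned_miss_prob P B M Acoll y s =
  \sum_(D <- subs (Wseq B y)) fine (P [set w | M y w = D]) *
    \sum_(E <- subs (Wseq B y)) wt y s E * \1_(~` Acoll y) (D `&` E).
Proof.
have us := subs_uniq (Wseq_uniq B y).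
rewrite /thinned_miss_prob /= subs_W -fsbig_seq //.
apply: eq_bigr => D _; rewrite -fsbig_seq // big_distrr /=.
by apply: eq_bigr => E _; rewrite /wt -mulrA.
Qed.

Lemma weight_sum y s (h : set word -> bool) :
  \sum_(E <- subs (Wseq B y)) wt y s E * (h E)%:R = frec (Wseq B y) (fun _ => 1 - s) h.
Proof. by rewrite -conv ?(Wseq_set sB) //; exact: Wseq_uniq. Qed.

Variable s0 : R.
Hypothesis HA : forall x, Bp x -> Acoll x !=set0 /\
  (forall X, Acoll x X -> X `<=` Wset Bp x) /\ monotonic (Acoll x) (Wset Bp x).
Hypothesis Hs0 : 0 <= s0 <= 1.
Hypothesis Hg : gA P B M Acoll s0 = s0.

Lemma wt_ge0 y E : 0 <= wt y s0 E.
Proof.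
case/andP: Hs0 => h0 h1.
by rewrite /wt; apply: mulr_ge0; apply: exprn_ge0; rewrite ?subr_ge0.
Qed.

Lemma thinned_le1 y : B y -> thinned_miss_prob P B M Acoll y s0 <= 1.
Proof.
move=> By; rewrite thinned_eq.
apply: (@le_trans _ _ (\sum_(D <- subs (Wseq B y)) fine (P [set w | M y w = D]) * 1)).
  apply: ler_sum => D _; apply: ler_wpM2l; first exact: fP_ge0.
  rewrite -(frec_true (Wseq B y) (fun _ => 1 - s0)) -weight_sum.
  apply: ler_sum => E _; apply: ler_wpM2l; first exact: wt_ge0.
  by rewrite indicE; case: (_ \in _).
have -> : \sum_(D <- subs (Wseq B y)) fine (P [set w | M y w = D]) * 1 =
    fine (P setT).
  rewrite (DEC P sB HM Hmeas By) //; apply: eq_bigr => D _.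
  by rewrite mulr1 setIT.
by rewrite probability_setT.
Qed.

Lemma Bp_nil : Bp [::].
Proof.
split => //.
have -> : [set w | rtree M w [::]] = setT.
  by apply/seteqP; split => // w _; exact: S_nil.
by rewrite probability_setT lte01.
Qed.

Lemma thinned_le_g y : Bp y -> thinned_miss_prob P B M Acoll y s0 <= s0.
Proof.
move=> By; rewrite -{2}Hg /gA.
apply: sup_upper_bound; last by exists y.
split; first by exists (thinned_miss_prob P B M Acoll [::] s0), [::] => //; exact: Bp_nil.
exists 1 => v [x Bx <-]; apply: thinned_le1; exact: Bp_B.
Qed.

Lemma sibling_eq a b : B a -> B b -> height B a = height B b -> prefix a b -> a = b.
Proof.
move=> Ba Bb hab pab.
case: (ltngtP (size a) (size b)) => hs.
- have := height_lt Ba (introT andP (conj pab hs)); by rewrite hab ltnn.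
- by move: (prefix_size pab); rewrite leqNgt hs.
- exact: prefix_size_eq.
Qed.

Lemma Wset_ne y j : B y -> Wset B y j -> pprefix y (y ++ j).
Proof. by move=> By /(WsetE _ By) []. Qed.

Lemma PG n y : Bp y -> fine (P (~` Gev M Acoll n y)) <= s0.
Proof.
elim: n y => [|n IH] y By.
  by rewrite /= setCT measure0 /=; case/andP: Hs0.
have By' := Bp_B By.
have mGc : measurable (~` Gev M Acoll n.+1 y) by apply: measurableC; exact: mG.
rewrite (DEC P sB HM Hmeas By' mGc).
apply: le_trans (thinned_le_g By); rewrite thinned_eq.
rewrite !big_seq; apply: ler_sum => D Ds.
have mD : measurable [set w | M y w = D] by exact: Hmeas.
have := fP_ge0 [set w | M y w = D]; rewrite le_eqVlt => /orP[/eqP z0|pos].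
  rewrite -z0 mul0r; apply: (@le_trans _ _ (fine (P [set w | M y w = D]))); last by rewrite -z0.
  by apply: fP_le => //; exact: measurableI.
have DW' := children By Ds pos.
have DW : D `<=` Wset B y by rewrite -(Wseq_set sB); exact: subs_sub.
pose ds := [seq j <- Wseq B y | `[< D j >]].
have uds : uniq ds by apply: filter_uniq; exact: Wseq_uniq.
have dsD : [set` ds] = D.
  apply/seteqP; split => j /=; rewrite mem_filter.
    by case/andP => /asboolP.
  move=> Dj; apply/andP; split; first exact/asboolP.
  by have := DW _ Dj; rewrite -(Wseq_set sB).
have hmono := (HA By).2.2.
have dsD' : forall j, j \in ds -> D j.
  by move=> j jd; rewrite -dsD /=.
pose hD := fun K : set word => K \in ~` Acoll y.
have eEv : [set w | M y w = D] `&` ~` Gev M Acoll n.+1 y =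
    [set w | M y w = D] `&` [set w | hD [set j | j \in ds /\ Gev M Acoll n (y ++ j) w]].
  apply/seteqP; split => w [/= eD H]; split => //.
    rewrite /hD; apply/mem_set => /= hA; apply: H.
    exists [set j | j \in ds /\ Gev M Acoll n (y ++ j) w]; split.
      by move=> j [jd _]; rewrite eD -dsD.
    by split => // j [].
  move=> [K [KM [AK HK]]].
  have : Acoll y [set j | j \in ds /\ Gev M Acoll n (y ++ j) w].
    apply: (hmono K) => //.
      move=> j Kj; split; last exact: HK.
      by have := KM _ Kj; rewrite eD -dsD.
    by move=> j [jd _]; apply: DW'; rewrite -dsD.
  by move: H; rewrite /hD => /set_mem.
rewrite eEv.
rewrite (@prob_frec ds (fun j => Gev M Acoll n (y ++ j)) (fun j => Useq n (y ++ j)) uds _ _ [:: y]); first last.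
- move=> j jd z /memU [_ [pz _]]; rewrite mem_seq1; apply/negP => /eqP ezy.
  have Dj := dsD' _ jd.
  have := Wset_ne By' (DW _ Dj) => /andP[_ hs].
  by move: (prefix_size pz); rewrite ezy leqNgt hs.
- exact: det_atom.
- by move=> z; rewrite mem_seq1 => /eqP ->.
- move=> j1 j2 j1d j2d j12 z /memU [_ [p1 _]]; apply/negP => /memU [_ [p2 _]].
  have Dj1 := dsD' _ j1d.
  have Dj2 := dsD' _ j2d.
  have [B1 h1] := DW _ Dj1.
  have [B2 h2] := DW _ Dj2.
  have h12 : height B (y ++ j1) = height B (y ++ j2) by rewrite h1 h2.
  case: (prefix_total p1 p2) => hp.
    by move: j12; rewrite (catIl (sibling_eq B1 B2 h12 hp)) eqxx.
  by move: j12; rewrite (catIl (sibling_eq B2 B1 (esym h12) hp)) eqxx.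
- move=> j jd; have Dj := dsD' _ jd.
  have [Byj _] := DW _ Dj.
  split; [exact: U_B|exact: det_G].
apply: ler_wpM2l; first exact: fP_ge0.
rewrite (@eq_bigr _ _ _ _ _ _ _ (fun E => wt y s0 E * (hD (D `&` E))%:R)); last first.
  by move=> E _; rewrite indicE.
rewrite weight_sum (frec_marg (Wseq B y) (fun=> 1 - s0) D hD).
apply: frec_mono.
  move=> j jd; have Dj := dsD' _ jd.
  have Bpj : Bp (y ++ j) by case: (DW' _ Dj).
  have Byj : B (y ++ j) by exact: Bp_B.
  have IHj := IH _ Bpj.
  have mGj := mG n Byj.
  have eC : fine (P (~` Gev M Acoll n (y ++ j))) = 1 - fine (P (Gev M Acoll n (y ++ j))).
    by rewrite probability_setC // fineB //; exact: Pfin.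
  rewrite eC in IHj.
  have := fP_le1 mGj; case/andP: Hs0 => s00 s01.
  by move=> h1; split => //; apply/andP; split; lra.
move=> E E' EE' E'ds; rewrite /hD => /set_mem nA; apply/mem_set => hA; apply: nA.
apply: (hmono E) => //.
by move=> j /E'ds; rewrite dsD => Dj; exact: DW'.
Qed.

Lemma cond_le x : Bp x -> cond_no_subtree P M Acoll x <= s0.
Proof.
move=> Bx; have Bx' := Bp_B Bx.
pose Sx := [set w | rtree M w x].
have mSx : measurable Sx := mS x.
have pos := Bp_pos Bx.
pose F n := Sx `&` ~` Gev M Acoll n x.
have mF : forall n, measurable (F n).
  by move=> n; apply: measurableI => //; apply: measurableC; exact: mG.
have eq : no_subtree_event M Acoll x `&` Sx = \bigcup_n F n.
  apply/seteqP; split => w.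
    move=> [noQ Sw]; apply: contrapT => hno; apply: noQ.
    apply: (G_subtree sB HM Sw) => n; apply: contrapT => nG; apply: hno.
    by exists n => //; split.
  move=> [n _ [Sw nG]]; split => // -[Q [sQ aQ]]; apply: nG.
  exact: (subtree_G sB HM Sw sQ aQ).
have mU : measurable (\bigcup_n F n) by exact: bigcupT_measurable.
have ndF : nondecreasing_seq F.
  move=> n m nm; apply/subsetPset => w [Sw nG]; split => // Gm; apply: nG.
  exact: Gev_mono nm Gm.
have cv := @nondecreasing_cvg_mu _ _ R P F mF mU ndF.
have hle : (P (\bigcup_n F n) <= (fine (P Sx) * s0)%:E)%E.
  rewrite -(cvg_lim _ cv) //.
  apply: lime_le; first by apply/cvg_ex; exists (P (\bigcup_n F n)).
  apply: nearW => n /=; rewrite (PE (mF n)) lee_fin.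
  rewrite /F (indep' (@Anc_B x) (@U_B n x) _ (@det_S x) (det_C (@det_G n x Bx'))).
    by apply: ler_wpM2l; [exact: fP_ge0|exact: PG].
  move=> z /memAnc [_ zx]; apply/negP => /memU [_ [xz _]].
  by have := pp_size zx; rewrite ltnNge (prefix_size xz).
rewrite /cond_no_subtree -/Sx eq.
rewrite ler_pdivrMr // mulrC.
by move: hle; rewrite (PE mU) lee_fin.
Qed.

End Main.

Theorem main_thm (A : finType) (R : realType) (d : measure_display)
  (Omega : measurableType d) (P : probability Omega R)
  (B : set (seq A)) (M : seq A -> Omega -> set (seq A))
  (Acoll : seq A -> set (set (seq A))) (s0 : R) :
  star_tree B ->
  (forall x, B x -> forall w, M x w `<=` Wset B x) ->
  offspring_measurable B M ->
  offspring_independent P B M ->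
  (forall x, Bprime P B M x ->
     Acoll x !=set0 /\
     (forall X, Acoll x X -> X `<=` Wset (Bprime P B M) x) /\
     monotonic (Acoll x) (Wset (Bprime P B M) x)) ->
  0 <= s0 <= 1 ->
  gA P B M Acoll s0 = s0 ->
  sup [set cond_no_subtree P M Acoll x | x in Bprime P B M] <= s0.
Proof.
move=> sB HM Hmeas Hind HA Hs0 Hg.
apply: ge_sup.
  by exists (cond_no_subtree P M Acoll [::]), [::] => //; exact: Bp_nil.
move=> v [x Bx <-].
exact: (cond_le sB HM Hmeas Hind HA Hs0 Hg Bx).
Qed.

Unset Implicit Arguments.

Theorem theorem5p17 (A : finType) (R : realType) (d : measure_display)
  (Omega : measurableType d) (P : probability Omega R)
  (B : set (seq A)) (M : seq A -> Omega -> set (seq A))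
  (Acoll : seq A -> set (set (seq A))) (s0 : R) :
  star_tree B ->
  (forall x, B x -> forall w, M x w `<=` Wset B x) ->
  offspring_measurable B M ->
  offspring_independent P B M ->
  bounded_offspring P B M ->
  (forall x, Bprime P B M x ->
     Acoll x !=set0 /\
     (forall X, Acoll x X -> X `<=` Wset (Bprime P B M) x) /\
     monotonic (Acoll x) (Wset (Bprime P B M) x)) ->
  0 <= s0 <= 1 ->
  gA P B M Acoll s0 = s0 ->
  (forall t, 0 <= t <= 1 -> gA P B M Acoll t = t -> s0 <= t) ->
  sup [set cond_no_subtree P M Acoll x | x in Bprime P B M] <= s0.
Proof.
move=> sB HM Hmeas Hind _ HA Hs0 Hg _.
exact: (main_thm sB HM Hmeas Hind HA Hs0 Hg).
Qed.
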